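(* Let $Q$ be a finite, simple, commutative, automorphic loop of exponent $2$ which is not associative. Let $U$ be the socle of $\mathrm{Mlt}(Q)$, a regular normal elementary abelian $2$-subgroup, viewed as a $GF(2)$-vector space (written additively) on which $\mathrm{Inn}(Q)$ acts linearly by conjugation, $u\mapsto u^h$. For $x\in Q$ write $R_x=h_xu_x$ with unique $h_x\in\mathrm{Inn}(Q)$ and $u_x\in U$; for $u\in U$ let $h_u=h_x$ where $x$ is the unique element with $u_x=u$. Then for all $u,v\in U$, $h_uh_v=h_vh_{u^{h_v}}$.
   Context: A loop is a set with a binary operation in which left and right division are uniquely solvable and which has a neutral element $1$. $R_a:x\mapsto xa$; $\mathrm{Mlt}(Q)$ is generated by all left and right translations; $\mathrm{Inn}(Q)$ is the stabilizer of $1$ in $\mathrm{Mlt}(Q)$; $Q$ is automorphic if $\mathrm{Inn}(Q)\le\mathrm{Aut}(Q)$; exponent $2$ means $x^2=1$ for all $x$; simple means no nontrivial proper normal subloops. For such $Q$, $\mathrm{Mlt}(Q)$ is a primitive group of affine type, $\mathrm{Mlt}(Q)=\mathrm{Inn}(Q)U$ with $U\cap\mathrm{Inn}(Q)=1$, and $Q$ is identified with $U$ via $u\leftrightarrow 1u$, under which $h\in\mathrm{Inn}(Q)$ acts as the linear map $u\mapsto u^h=h^{-1}uh$. Maps act on the right and are composed left to right. The map $x\mapsto u_x$ is a bijection $Q\to U$. *)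

(* Defs.v *)
From HB Require Import structures.
From mathcomp Require Import all_boot fingroup perm gseries.
Set Implicit Arguments. Unset Strict Implicit. Unset Printing Implicit Defensive.
Import GroupScope.
Local Open Scope group_scope.

(* A finite loop on the finite type T: binary operation with neutral element
   and uniquely solvable left/right division (for a finite carrier, unique
   solvability is equivalent to injectivity of the translations). *)
Record loop (T : finType) := Loop {
  lmul : T -> T -> T;
  lone : T;
  lmul1x : forall x, lmul lone x = x;
  lmulx1 : forall x, lmul x lone = x;
  lmul_injl : forall a, injective (lmul a);
  lmul_injr : forall a, injective (fun x => lmul x a)
}.

Section LoopDefs.
Variables (T : finType) (Q : loop T).
Declare Scope loop_scope.
Local Notation "x * y" := (lmul Q x y) : loop_scope.
Delimit Scope loop_scope with L.

Definition Rt (a : T) : {perm T} := perm (@lmul_injr T Q a).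
Definition Lt (a : T) : {perm T} := perm (@lmul_injl T Q a).

(* Multiplication group (composition in {perm T} is left to right,
   (p * q) x = q (p x), matching the paper's convention). *)
Definition Mlt : {set {perm T}} :=
  <<[set Rt a | a in T] :|: [set Lt a | a in T]>>.

Definition Inn : {set {perm T}} := [set h in Mlt | h (lone Q) == lone Q].

Definition is_loop_aut (f : {perm T}) : Prop :=
  forall x y, f (x * y)%L = (f x * f y)%L.

Definition automorphic : Prop := forall h, h \in Inn -> is_loop_aut h.

Definition commutative_loop : Prop := forall x y, (x * y)%L = (y * x)%L.

Definition exponent2 : Prop := forall x, (x * x)%L = lone Q.

Definition associative_loop : Prop :=
  forall x y z, (x * (y * z))%L = ((x * y) * z)%L.

Definition subloop (N : {set T}) : Prop :=
  [/\ lone Q \in N,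
      (forall a b, a \in N -> b \in N -> (a * b)%L \in N),
      (forall a x, a \in N -> (a * x)%L \in N -> x \in N) &
      (forall a x, a \in N -> (x * a)%L \in N -> x \in N)].

Definition normal_subloop (N : {set T}) : Prop :=
  subloop N /\ (forall h, h \in Inn -> h @: N \subset N).

Definition simple_loop : Prop :=
  forall N, normal_subloop N -> N = [set lone Q] \/ N = setT.

End LoopDefs.

Definition socle (gT : finGroupType) (G : {set gT}) : {set gT} :=
  <<\bigcup_(M : {group gT} | minnormal M G) M>>.

(* Main.v *)
Require Import Defs.
From HB Require Import structures.
From mathcomp Require Import all_boot fingroup perm gseries.
Import GroupScope.

Theorem lemma4p2 (T : finType) (Q : loop T) :
  simple_loop Q -> commutative_loop Q -> automorphic Q -> exponent2 Q ->
  ~ associative_loop Q ->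
  forall (h u : T -> {perm T}),
    (forall x, h x \in Inn Q) ->
    (forall x, u x \in socle (Mlt Q)) ->
    (forall x, Rt Q x = (h x * u x)%g) ->
  forall x y z, u z = (u x ^ h y)%g ->
    (h x * h y)%g = (h y * h z)%g.
Proof.
move=> _ _ Haut _ _ h u hInn _ hR x y z hz.
set g := h y.
have gA : is_loop_aut Q g := Haut _ (hInn y).
have fix1 : forall w, h w (lone Q) = lone Q.
  by move=> w; have := hInn w; rewrite inE => /andP [_ /eqP].
have u1 : forall w, u w (lone Q) = w.
  move=> w; have := congr1 (fun p : {perm T} => p (lone Q)) (hR w).
  by rewrite /= permM fix1 /Rt permE lmul1x.
have g1 : g^-1 (lone Q) = lone Q.
  by apply: (@perm_inj _ g); rewrite -permM mulVg perm1 fix1.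
have ez : z = g x.
  have := congr1 (fun p : {perm T} => p (lone Q)) hz.
  by rewrite /= u1 /conjg !permM g1 u1.
have RC : Rt Q (g x) = Rt Q x ^ g.
  apply/permP => w; rewrite /conjg !permM /Rt !permE.
  rewrite gA; congr (lmul Q _ _); by rewrite f_iinv.
have : (h z * u z)%g = (h x ^ g * u z)%g.
  by rewrite -hR ez RC hR conjMg -hz ez.
move/mulIg => ->.
by rewrite conjgC.
Qed.
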